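(* There exist $N_0\in\mathbb{N}$ and $C>0$ such that \[\frac{R^2}{w(B(x,R))}\pi(B(x,R))\le C\Big(\frac{R}{\rho_w(x,\mu)}\Big)^{N_0}\] for all $x\in\mathbb{R}^d$ and all $R\ge\rho_w(x,\mu)$.
   Context: Setting: $d\ge3$; $w\in A_2$ is a weight on $\mathbb{R}^d$, $w(E)=\int_Ew\,dx$, and there exist $\beta>2$, $C>0$ with $w(B(x,tr))\ge Ct^\beta w(B(x,r))$ for all $x$, $r>0$, $t>1$. $\mu$ is a positive Radon measure, $d\pi=w\,d\mu$, with constants $C_0,\delta,C_1>0$ such that (M1) $\frac{r^2}{w(B(x,r))}\pi(B(x,r))\le C_0 (r/R)^\delta \frac{R^2}{w(B(x,R))}\pi(B(x,R))$ for all $x$, $0<r<R$; (M2) $\pi(B(x,2r))\le C_1(\pi(B(x,r))+w(B(x,r))/r^2)$ for all $x$, $r>0$. The critical function is $\rho_w(x,\mu)=\sup\{r>0:\frac{r^2}{w(B(x,r))}\pi(B(x,r))\le C_1\}$. *)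

(* Defs.v *)
From HB Require Import structures.
From mathcomp Require Import all_boot all_order all_algebra.
From mathcomp Require Import all_classical all_reals all_analysis.
Set Implicit Arguments. Unset Strict Implicit. Unset Printing Implicit Defensive.
Import Order.TTheory GRing.Theory Num.Theory.
Import numFieldNormedType.Exports.
Local Open Scope classical_set_scope.
Local Open Scope ring_scope.

(* R^d as row vectors, equipped with its Borel sigma-algebra
   (generated by the open sets of the product topology, which is the
   Euclidean topology). *)
Notation Rd R d := (g_sigma_algebraType (@open 'rV[R]_d)).

Definition enorm (R : realType) (d : nat) (y : 'rV[R]_d) : R :=
  Num.sqrt (\sum_(i < d) (y 0 i) ^+ 2).

Definition eball (R : realType) (d : nat) (x : 'rV[R]_d) (r : R) : set (Rd R d) :=
  (fun y : 'rV[R]_d => enorm (y - x) < r).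

Definition box (R : realType) (d : nat) (a b : 'rV[R]_d) : set (Rd R d) :=
  (fun y : 'rV[R]_d => forall i, a 0 i <= y 0 i <= b 0 i).

(* lam is the (Borel) Lebesgue measure on R^d: it is a measure on the Borel
   sets giving each closed box its volume (this determines it uniquely). *)
Definition is_lebesgue (R : realType) (d : nat)
    (lam : {measure set (Rd R d) -> \bar R}) : Prop :=
  forall a b : 'rV[R]_d, (forall i, a 0 i <= b 0 i) ->
    lam (box a b) = (\prod_(i < d) (b 0 i - a 0 i))%:E.

Definition wmeas (R : realType) (d : nat)
    (lam : {measure set (Rd R d) -> \bar R}) (w : Rd R d -> R) (E : set (Rd R d))
    : \bar R :=
  (\int[lam]_(y in E) (w y)%:E)%E.

(* w is an A_2 weight: a nonnegative Borel function such that
   sup_B (avg_B w)(avg_B w^{-1}) < oo over all Euclidean balls B.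
   (Finiteness of this quantity forces local integrability of w and w^{-1}
   and w > 0 a.e.) *)
Definition A2_weight (R : realType) (d : nat)
    (lam : {measure set (Rd R d) -> \bar R}) (w : Rd R d -> R) : Prop :=
  measurable_fun setT w /\ (forall y, 0 <= w y) /\
  exists A : R, forall (x : 'rV[R]_d) (r : R), 0 < r ->
    ((wmeas lam w (eball x r) * (lam (eball x r))^-1) *
     ((\int[lam]_(y in eball x r) ((w y)%:E)^-1) * (lam (eball x r))^-1)
     <= A%:E)%E.

Definition radon (R : realType) (d : nat) (mu : {measure set (Rd R d) -> \bar R})
    : Prop :=
  forall K : set 'rV[R]_d, compact K -> (mu K < +oo)%E.

Definition pimeas (R : realType) (d : nat)
    (mu : {measure set (Rd R d) -> \bar R}) (w : Rd R d -> R) (E : set (Rd R d))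
    : \bar R :=
  (\int[mu]_(y in E) (w y)%:E)%E.

Definition Fquot (R : realType) (d : nat)
    (lam mu : {measure set (Rd R d) -> \bar R}) (w : Rd R d -> R)
    (x : 'rV[R]_d) (r : R) : \bar R :=
  ((r ^+ 2)%:E * (wmeas lam w (eball x r))^-1 * pimeas mu w (eball x r))%E.

Definition rho_w (R : realType) (d : nat)
    (lam mu : {measure set (Rd R d) -> \bar R}) (w : Rd R d -> R) (C1 : R)
    (x : 'rV[R]_d) : \bar R :=
  ereal_sup [set r%:E | r in [set r : R | 0 < r /\ (Fquot lam mu w x r <= C1%:E)%E]].

(* Main.v *)
Require Import Defs.
From HB Require Import structures.
From mathcomp Require Import all_boot all_order all_algebra.
From mathcomp Require Import all_classical all_reals all_analysis.
From mathcomp Require Import ring lra.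
Import Order.TTheory GRing.Theory Num.Theory.
Import numFieldNormedType.Exports.
Local Open Scope classical_set_scope.
Local Open Scope ring_scope.


Lemma dbl_real (R : realType) (a Cw2 C1 K wr w2 pr p2 : R) :
  0 < a -> 0 < Cw2 -> 0 < C1 -> 0 <= K -> 0 < wr -> 0 <= pr ->
  Cw2 * wr <= w2 -> p2 <= C1 * (pr + wr * a^-1) -> a * wr^-1 * pr <= K ->
  4 * a * w2^-1 * p2 <= 4 * C1 * (K + 1) / Cw2.
Proof.
move=> a0 c0 C10 K0 wr0 pr0 h1 h2 h3.
have w20 : 0 < w2 by apply: lt_le_trans h1; rewrite mulr_gt0.
have hpr : a * pr <= K * wr.
  have -> : a * pr = (a * wr^-1 * pr) * wr by field; rewrite gt_eqF.
  by rewrite ler_pM2r.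
have hp2 : a * p2 <= C1 * (K + 1) * wr.
  have h4 : a * p2 <= a * (C1 * (pr + wr * a^-1)) by rewrite ler_pM2l.
  have e : a * (C1 * (pr + wr * a^-1)) = C1 * (a * pr + wr) by field; rewrite gt_eqF.
  rewrite e in h4.
  apply: (le_trans h4); rewrite -mulrA ler_pM2l // mulrDl mul1r lerD2r //.
have hw : C1 * (K + 1) * wr * Cw2 <= C1 * (K + 1) * w2.
  by rewrite -mulrA ler_pM2l ?mulr_gt0 ?ltr_pwDr // mulrC.
have -> : 4 * a * w2^-1 * p2 = 4 * (a * p2 * Cw2) / w2 / Cw2 by field; rewrite !gt_eqF.
rewrite ler_pM2r ?invr_gt0 // ler_pdivrMr //.
rewrite -!mulrA ler_pM2l // !mulrA.
apply: (le_trans _ hw); by rewrite ler_pM2r.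
Qed.

Local Open Scope ereal_scope.
Lemma dbl_ereal (R : realType) (a Cw2 C1 K : R) (Wr W2 Pr P2 : \bar R) :
  (0 < a)%R -> (0 < Cw2)%R -> (0 < C1)%R -> (0 <= K)%R ->
  0 <= Wr -> 0 <= W2 -> 0 <= Pr -> 0 <= P2 ->
  Cw2%:E * Wr <= W2 ->
  P2 <= C1%:E * (Pr + Wr * (a^-1)%:E) ->
  a%:E * Wr^-1 * Pr <= K%:E ->
  (4 * a)%:E * W2^-1 * P2 <= (4 * C1 * (K + 1) / Cw2)%:E.
Proof.
move=> a0 c0 C10 K0 hWr hW2 hPr hP2 h1 h2 h3.
have rhs0 : (0 <= 4 * C1 * (K + 1) / Cw2)%R.
  by apply: divr_ge0; [apply: mulr_ge0; lra | lra].
case: W2 hW2 h1 => [w2| |] // hw2 h1; last by rewrite invey mule0 mul0e lee_fin.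
case: Wr hWr h1 h2 h3 => [wr| |] // hwr h1 h2 h3; last first.
  by move: h1; rewrite mulr_infty gtr0_sg // mul1e leye_eq.
have [wr0|wrpos] := eqVneq wr 0%R.
  subst wr.
  have Pr0 : Pr = 0.
    apply/eqP; rewrite eq_le hPr andbT; apply: contraTT h3 => Prp.
    rewrite -ltNge inver eqxx.
    rewrite mulr_infty gtr0_sg //.
    rewrite mul1e.
    have -> : +oo * Pr = +oo by apply: gt0_mulye; rewrite ltNge.
    exact: ltey.
  subst Pr; move: h2; rewrite mul0e adde0 mule0 => h2.
  have -> : P2 = 0 by apply/eqP; rewrite eq_le h2 hP2.
  by rewrite mule0 lee_fin.
have wr0 : (0 < wr)%R by rewrite lt_def wrpos -lee_fin.
case: Pr hPr h2 h3 => [pr| |] // hpr h2 h3; last first.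
  move: h3; rewrite inver (negbTE wrpos) -EFinM gt0_muley ?lte_fin ?mulr_gt0 ?invr_gt0 //.
case: P2 hP2 h2 => [p2| |] // hp2 h2.
move: h1 h2 h3; rewrite inver (negbTE wrpos) -?EFinM -?EFinD -?EFinM !lee_fin => h1 h2 h3.
rewrite inver; case: eqP => [w20|w20].
  subst w2; exfalso; move: h1; rewrite leNgt mulr_gt0 //.
rewrite -!EFinM lee_fin.
have pr0 : (0 <= pr)%R by rewrite -lee_fin.
exact: (dbl_real _ _ _ _ _ _ _ _ _ a0 c0 C10 K0 wr0 pr0 h1 h2 h3).
Qed.

Local Close Scope ereal_scope.

Theorem lemma2p2 (R : realType) (d : nat) (hd : (3 <= d)%N)
  (lam : {measure set (Rd R d) -> \bar R}) (hlam : is_lebesgue lam)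
  (w : Rd R d -> R) (hw : A2_weight lam w)
  (beta Cw : R) (hbeta : 2 < beta) (hCw : 0 < Cw)
  (hrev : forall (x : 'rV[R]_d) (r t : R), 0 < r -> 1 < t ->
     (wmeas lam w (eball x (t * r)) >= (Cw * t `^ beta)%:E * wmeas lam w (eball x r))%E)
  (mu : {measure set (Rd R d) -> \bar R}) (hmu : radon mu)
  (C0 delta C1 : R) (hC0 : 0 < C0) (hdelta : 0 < delta) (hC1 : 0 < C1)
  (M1 : forall (x : 'rV[R]_d) (r R' : R), 0 < r -> r < R' ->
     (Fquot lam mu w x r <= (C0 * (r / R') `^ delta)%:E * Fquot lam mu w x R')%E)
  (M2 : forall (x : 'rV[R]_d) (r : R), 0 < r ->
     (pimeas mu w (eball x (2 * r)) <=
      C1%:E * (pimeas mu w (eball x r) + wmeas lam w (eball x r) * ((r ^+ 2)^-1)%:E))%E) :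
  exists (N0 : nat) (C : R), 0 < C /\
    forall (x : 'rV[R]_d) (R' : R),
      (0 < rho_w lam mu w C1 x)%E -> (rho_w lam mu w C1 x <= R'%:E)%E ->
      (Fquot lam mu w x R' <= (C * (R' / fine (rho_w lam mu w C1 x)) ^+ N0)%:E)%E.
Proof.
have w0 : forall y, (0 <= w y)%R := hw.2.1.
have W0 : forall x r, (0 <= wmeas lam w (eball x r))%E.
  by move=> x r; apply: integral_ge0 => y _; rewrite lee_fin.
have P0 : forall x r, (0 <= pimeas mu w (eball x r))%E.
  by move=> x r; apply: integral_ge0 => y _; rewrite lee_fin.
have F0 : forall x r, (0 <= Fquot lam mu w x r)%E.
  move=> x r; rewrite /Fquot; apply: mule_ge0; last exact: P0.
  by apply: mule_ge0; [rewrite lee_fin sqr_ge0 | rewrite inve_ge0].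
have Cw2pos : (0 < Cw * 2 `^ beta)%R by rewrite mulr_gt0 // powR_gt0.
set D' := (4 * C1 / (Cw * 2 `^ beta))%R.
have D0 : (0 <= D')%R by rewrite /D' divr_ge0 // ?ltW //; lra.
set E := (D' + 1)%R.
have E1 : (1 <= E)%R by rewrite /E; lra.
have Fdbl : forall x r K, (0 < r)%R -> (0 <= K)%R -> (Fquot lam mu w x r <= K%:E)%E ->
    (Fquot lam mu w x (2 * r) <= (D' * (K + 1))%:E)%E.
  move=> x r K r0 K0 hF.
  have e : ((2 * r) ^+ 2 = 4 * r ^+ 2)%R by ring.
  have -> : (D' * (K + 1) = 4 * C1 * (K + 1) / (Cw * 2 `^ beta))%R by rewrite /D' mulrAC.
  rewrite /Fquot e.
  apply: (@dbl_ereal _ _ _ _ _ (wmeas lam w (eball x r)) _ (pimeas mu w (eball x r))) => //.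
  - by rewrite exprn_gt0.
  - by apply: hrev => //; lra.
  - by apply: M2.
have Fiter : forall x r n, (0 < r)%R -> (Fquot lam mu w x r <= C1%:E)%E ->
    (Fquot lam mu w x (2 ^+ n * r) <= (E ^+ n * (C1 + 1) - 1)%:E)%E.
  move=> x r n r0 hF; elim: n => [|n IH].
    by rewrite !expr0 !mul1r; move: hF; rewrite addrK.
  have G1 : (1 <= E ^+ n * (C1 + 1))%R.
    by apply: mulr_ege1; [exact: exprn_ege1 | lra].
  have -> : (2 ^+ n.+1 * r = 2 * (2 ^+ n * r))%R by rewrite exprS mulrA.
  apply: (le_trans (Fdbl _ _ _ _ _ IH)).
  - by rewrite mulr_gt0 // exprn_gt0.
  - by rewrite subr_ge0.
  rewrite lee_fin subrK exprS -mulrA mulrDl mul1r -addrA lerDl subr_ge0 //.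
have Fmono : forall x s t M, (0 < s)%R -> (s < t)%R -> (0 <= M)%R ->
    (Fquot lam mu w x t <= M%:E)%E -> (Fquot lam mu w x s <= (C0 * M)%:E)%E.
  move=> x s t M s0 st M0 hF.
  apply: (le_trans (M1 x s t s0 st)).
  have t0 : (0 < t)%R by apply: lt_trans st.
  have p1 : ((s / t) `^ delta <= 1)%R.
    rewrite -(powRr0 (s / t)); apply: ger_powR; last exact: ltW.
    by rewrite divr_gt0 //= ler_pdivrMr // mul1r ltW.
  move: (F0 x t) hF; case: (Fquot lam mu w x t) => [f| |] //.
  rewrite !lee_fin => f0 fM.
  rewrite -mulrA ler_pM2l //.
  rewrite -[M]mul1r; apply: ler_pM => //; exact: powR_ge0.
have archi2 : forall y : R, (0 <= y)%R -> exists N : nat, (y <= 2 ^+ N)%R.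
  move=> y y0; exists (Num.Def.archi_bound y).
  apply: (le_trans (ltW (archi_boundP y0))).
  rewrite -natrX ler_nat; apply: ltnW; exact: ltn_expl.
have [N0 hN0] := archi2 E (le_trans ler01 E1).
exists N0, (C0 * (C1 + 1) * 4 ^+ N0)%R; split.
  by rewrite mulr_gt0 ?exprn_gt0 // ?mulr_gt0 //; lra.
move=> x R' hpos hle.
case Erho : (rho_w lam mu w C1 x) hpos hle => [rho| |] // hpos hle.
rewrite lte_fin in hpos; rewrite lee_fin in hle; rewrite /=.
have hg : ((rho / 2)%:E < rho_w lam mu w C1 x)%E by rewrite Erho lte_fin; lra.
have [y [r [r0 hFr] <-] hlt] := ereal_sup_gt hg.
rewrite lte_fin in hlt.
have R'0 : (0 < R')%R by lra.
have [m hm] : exists m : nat, (R' < 2 ^+ m * r)%R.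
  have [m hm] := archi2 (R' / r * 2)%R (ltW (mulr_gt0 (divr_gt0 R'0 r0) (ltr0Sn _ 1))).
  exists m; rewrite -ltr_pdivrMr //; apply: (lt_le_trans _ hm).
  rewrite ltr_pMr ?divr_gt0 //; lra.
have [n [hn1 hn2]] : exists n : nat, (R' < 2 ^+ n * r)%R /\ (2 ^+ n * rho <= 4 * R')%R.
  elim: m hm => [|m IH] hm.
    by exists 0%N; split => //; rewrite expr0 mul1r; lra.
  have [hlt'|hge] := ltP R' (2 ^+ m * r)%R; first exact: IH.
  exists m.+1; split => //.
  rewrite exprS -mulrA.
  have : (2 ^+ m * rho <= 2 * (2 ^+ m * r))%R.
    rewrite mulrCA ler_pM2l ?exprn_gt0 //; lra.
  move=> h; nra.
have hF := Fiter x r n r0 hFr.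
have G1 : (1 <= E ^+ n * (C1 + 1))%R.
  by apply: mulr_ege1; [exact: exprn_ege1 | lra].
have M0 : (0 <= E ^+ n * (C1 + 1) - 1)%R by rewrite subr_ge0.
have := Fmono x R' (2 ^+ n * r) _ R'0 hn1 M0 hF.
move=> h; apply: (le_trans h); rewrite lee_fin.
have hE : (E ^+ n <= 4 ^+ N0 * (R' / rho) ^+ N0)%R.
  apply: (le_trans (y := (2 ^+ N0) ^+ n)%R).
    by apply: lerXn2r; rewrite ?nnegrE ?exprn_ge0 //; lra.
  rewrite exprAC -exprMn; apply: lerXn2r; rewrite ?nnegrE ?exprn_ge0 //.
  - by rewrite mulr_ge0 // divr_ge0 //; lra.
  - by rewrite mulrA ler_pdivlMr // mulrC.
have -> : (C0 * (C1 + 1) * 4 ^+ N0 * (R' / rho) ^+ N0 = C0 * ((C1 + 1) * (4 ^+ N0 * (R' / rho) ^+ N0)))%R.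
  by rewrite !mulrA.
rewrite ler_pM2l // lerBlDr (mulrC (E ^+ n)).
apply: (le_trans (y := ((C1 + 1) * (4 ^+ N0 * (R' / rho) ^+ N0))%R)).
  by rewrite ler_pM2l //; lra.
by rewrite lerDl.
Qed.
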